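(* Suppose that for every $J\subseteq S$ we are given a function $\mathrm{Irr}(W_J)\to\Gamma$, $E\mapsto a_E$, such that for every $J\subseteq S$ (regarding $(W_J,J)$ as a Coxeter group with the restricted weight function) the following hold: (A0) $a_{1_{W_J}}=0$ when $W_J=\{1\}$ (i.e. $J=\varnothing$); (A1) if $K\subsetneqq J$, $M\in\mathrm{Irr}(W_K)$, $E\in\mathrm{Irr}(W_J)$ and $E$ is a constituent of $\mathrm{Ind}_{W_K}^{W_J}M$, then $a_M\le a_E$; (A2) if $K\subsetneqq J$ and $M\in\mathrm{Irr}(W_K)$, then there is $E\in\mathrm{Irr}(W_J)$ which is a constituent of $\mathrm{Ind}_{W_K}^{W_J}M$ with $a_M=a_E$; (A3) for every $E\in\mathrm{Irr}(W_J)$ there exist $K\subsetneqq J$ and $M\in\mathrm{Irr}(W_K)$ such that either $E$ is a constituent of $\mathrm{Ind}_{W_K}^{W_J}M$ and $a_M=a_E$, or $E\otimes\mathrm{sgn}$ is a constituent of $\mathrm{Ind}_{W_K}^{W_J}M$ and $a_M=a_{E\otimes\mathrm{sgn}}$; (A4) for every $E\in\mathrm{Irr}(W_J)$, $a_{E\otimes\mathrm{sgn}}-a_E=\omega_L(E)$ (computed in $W_J$). Then $a_E=\tilde a_E$ for all $J\subseteq S$ and all $E\in\mathrm{Irr}(W_J)$; in particular for all $E\in\mathrm{Irr}(W)$.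
   Context: $(W,S)$ is a finite Coxeter group with length function $l$. $\Gamma$ is an abelian group with a total order $\le$ compatible with addition. $L\colon W\to\Gamma$ is a weight function: $L(ww')=L(w)+L(w')$ whenever $l(ww')=l(w)+l(w')$; assume $L(s)\ge 0$ for all $s\in S$. For $J\subseteq S$, $W_J$ is the parabolic subgroup generated by $J$ (a Coxeter group with generators $J$), and $L$ restricts to a weight function on it. $\mathrm{Irr}(W)$ is the set of complex irreducible representations of $W$; $\mathrm{sgn}$ is the sign representation; $1_W$ the trivial one. For a Coxeter group $(W,S)$: let $S'\subseteq S$ be a set of representatives of the conjugacy classes of $W$ contained in $T=\{wsw^{-1}\}$, and $N_s$ the size of the class of $s$; set $\omega_L(E):=\sum_{s\in S'}\frac{N_s\,\mathrm{trace}(s,E)}{\dim E}L(s)\in\Gamma$. For $M\in\mathrm{Irr}(W_J)$, write $M\uparrow E$ if $E$ is a constituent of $\mathrm{Ind}_{W_J}^W M$. Definition of $\tilde a$ (recursively over parabolic subgroups): if $W=\{1\}$, $\tilde a_{1_W}:=0$. Otherwise, assuming $\tilde a$ defined for all $W_J$, $J\subsetneqq S$, set $\tilde a'_E:=\max\{\tilde a_M\mid M\in\mathrm{Irr}(W_J),\ J\subsetneqq S,\ M\uparrow E\}$, and $\tilde a_E:=\tilde a'_E$ if $\tilde a'_{E\otimes\mathrm{sgn}}-\tilde a'_E\le\omega_L(E)$, and $\tilde a_E:=\tilde a'_{E\otimes\mathrm{sgn}}-\omega_L(E)$ otherwise. The same recursion defines $\tilde a$ on $\mathrm{Irr}(W_J)$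 for every $J\subseteq S$. *)

(* Defs.v *)
From HB Require Import structures.
From mathcomp Require Import all_boot all_order all_algebra all_fingroup all_solvable all_field all_character.
Set Implicit Arguments. Unset Strict Implicit. Unset Printing Implicit Defensive.
Import Order.TTheory GRing.Theory Num.Theory.

Section Coxeter.
Variable gT : finGroupType.
Local Open Scope group_scope.

Definition cox_words (S : {set gT}) (n : nat) : {set gT} :=
  iter n (fun X : {set gT} => X * S) [set 1].

(* length function l_S : the least n such that w is a product of n
   elements of S (for w in <<S>>, this n is < #|gT|.+1). *)
Definition cox_len (S : {set gT}) (w : gT) : nat :=
  find (fun n => w \in cox_words S n) (iota 0 #|gT|.+1).

(* (W,S) is a Coxeter system: S is a set of involutions generating W, and
   W has the Coxeter presentation < S | (st)^{m(s,t)} = 1 >, with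
   m(s,t) the order of st in W, expressed by the universal property
   of the presentation (tested against finite groups). *)
Definition coxeter_system (W : {group gT}) (S : {set gT}) : Prop :=
  [/\ S \subset W, <<S>> = W,
      {in S, forall s, s != 1 /\ s ^+ 2 = 1} &
      forall (hT : finGroupType) (f : gT -> hT),
        {in S &, forall s t, (f s * f t) ^+ #[s * t] = 1} ->
        exists phi : {morphism W >-> hT}, {in S, forall s, phi s = f s}].
End Coxeter.

Section Gamma.
Variable Γ : zmodType.
Variable le : rel Γ.
Local Open Scope ring_scope.

Definition ordered_abgroup : Prop :=
  [/\ reflexive le, antisymmetric le, transitive le, total le &
      forall x y z, le x y -> le (x + z) (y + z)].

Definition gmax (x y : Γ) : Γ := if le x y then y else x.

Variable gT : finGroupType.

Definition weight_function (W : {group gT}) (S : {set gT}) (L : gT -> Γ) : Prop :=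
  {in W &, forall w w', cox_len S (w * w')%g = (cox_len S w + cox_len S w')%N ->
                         L (w * w')%g = L w + L w'}.

(* omega_L(E) for the group G = W_J with simple reflections J:
   sum over the conjugacy classes C of G meeting J (one representative
   s_C in C ∩ J each) of  (N_s trace(s,E)/dim E) L(s).  The coefficient
   N_s chi(s)/chi(1) is an integer, so it is taken through floor. *)
Definition omegaL (L : gT -> Γ) (G : {group gT}) (J : {set gT}) (i : Iirr G) : Γ :=
  \sum_(C in classes G | C :&: J != set0)
     L (repr (C :&: J)) *~
       Num.floor ((#|C|%:R * 'chi_i (repr (C :&: J))) / 'chi_i 1%g).

(* index of E ⊗ sgn, where sgn(g) = (-1)^(l_J(g)) on G = W_J *)
Definition sgn_twist (G : {group gT}) (J : {set gT}) (i : Iirr G) : Iirr G :=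
  odflt i [pick j : Iirr G |
     [forall g in G, 'chi_j g == 'chi_i g * (-1) ^+ cox_len J g]].

Variable L : gT -> Γ.

(* the recursive definition of tilde a, with fuel n (n >= #|J| suffices) *)
Fixpoint atilde_fuel (n : nat) (J : {set gT}) : Iirr <<J>>%G -> Γ :=
  match n with
  | 0 => fun _ => 0
  | n'.+1 => fun i =>
    if J == set0 then 0 else
    let a' := fun i' : Iirr <<J>>%G =>
      \big[gmax/0]_(K : {set gT} | K \proper J)
        \big[gmax/0]_(k : Iirr <<K>>%G | i' \in irr_constt ('Ind[<<J>>%G] 'chi_k))
          @atilde_fuel n' K k in
    let w := @omegaL L <<J>>%G J i in
    let ts := @sgn_twist <<J>>%G J i in
    if le (a' ts - a' i) w then a' i else a' ts - w
  end.

Definition atilde (J : {set gT}) (i : Iirr <<J>>%G) : Γ := @atilde_fuel #|J| J i.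
End Gamma.
Arguments atilde [Γ] le [gT] L J i.

(* Main.v *)
Require Import Defs.
From HB Require Import structures.
From mathcomp Require Import all_boot all_order all_algebra all_fingroup all_solvable all_field all_character.
Import Order.TTheory GRing.Theory Num.Theory.
Local Open Scope ring_scope.

Lemma triv_Iirr (gT : finGroupType) (i : Iirr (<<(set0 : {set gT})>>%G)) : i = 0.
Proof.
have H1 : Nirr (<<(set0 : {set gT})>>%G) = 1%N.
  have := card_classes_abelian (<<(set0 : {set gT})>>%G).
  rewrite NirrE /= gen0 abelian1 cards1 => /esym /eqP ->; by [].
apply: val_inj => /=; have := ltn_ord i; move: (nat_of_ord i) => m.
by rewrite H1; case: m.
Qed.

Section G.
Set Implicit Arguments. Unset Strict Implicit.
Variables (Γ : zmodType) (le : rel Γ).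
Hypothesis hle : ordered_abgroup le.

Lemma le_refl x : le x x.
Proof. by case: hle => r _ _ _ _; apply: r. Qed.
Lemma le_trans' x y z : le x y -> le y z -> le x z.
Proof. by case: hle => _ _ t _ _ h1 h2; apply: (t y). Qed.
Lemma le_anti x y : le x y -> le y x -> x = y.
Proof. by case: hle => _ a _ _ _ h1 h2; apply: a; rewrite h1 h2. Qed.
Lemma le_total' x y : le x y || le y x.
Proof. by case: hle => _ _ _ t _; apply: t. Qed.
Lemma le_add x y z : le x y -> le (x + z) (y + z).
Proof. by case: hle => _ _ _ _ a; apply: a. Qed.

Lemma gmax_l x y : le x (gmax le x y).
Proof.
rewrite /gmax; case: ifP => h; first by rewrite h.
exact: le_refl.
Qed.
Lemma gmax_r x y : le y (gmax le x y).
Proof.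
rewrite /gmax; case: ifP => h; first exact: le_refl.
by have := le_total' x y; rewrite h.
Qed.

Lemma big_gmax_ge (I : eqType) (r : seq I) (P : pred I) (F : I -> Γ) j :
  j \in r -> P j -> le (F j) (\big[gmax le/0]_(i <- r | P i) F i).
Proof.
elim: r => // x r IH; rewrite inE big_cons => /orP [/eqP -> | jr] Pj.
  by rewrite Pj; apply: gmax_l.
case: ifP => _; last exact: IH.
exact: le_trans' (IH jr Pj) (gmax_r _ _).
Qed.

Lemma big_gmax_le (I : Type) (r : seq I) (P : pred I) (F : I -> Γ) x :
  le 0 x -> (forall i, P i -> le (F i) x) ->
  le (\big[gmax le/0]_(i <- r | P i) F i) x.
Proof.
move=> h0 hF; apply: (big_ind (fun v => le v x)) => //.
by move=> u v hu hv; rewrite /gmax; case: ifP.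
Qed.
End G.

Lemma atilde_fuelS (Γ : zmodType) (le : rel Γ) (gT : finGroupType) (L : gT -> Γ)
   n (J : {set gT}) (i : Iirr <<J>>%G) :
  atilde_fuel le L n.+1 i =
    if J == set0 then 0 else
    let a' := fun i' : Iirr <<J>>%G =>
      \big[gmax le/0]_(K : {set gT} | K \proper J)
        \big[gmax le/0]_(k : Iirr <<K>>%G | i' \in irr_constt ('Ind[<<J>>%G] 'chi_k))
          @atilde_fuel _ le _ L n K k in
    let w := @omegaL _ _ L <<J>>%G J i in
    let ts := @sgn_twist _ <<J>>%G J i in
    if le (a' ts - a' i) w then a' i else a' ts - w.
Proof. by []. Qed.

Theorem mainTheorem5 (gT : finGroupType) (W : {group gT}) (S : {set gT})
  (Γ : zmodType) (le : rel Γ) (L : gT -> Γ)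
  (a : forall J : {set gT}, Iirr <<J>>%G -> Γ) :
  coxeter_system W S ->
  ordered_abgroup le ->
  weight_function W S L ->
  {in S, forall s, le 0%R (L s)} ->
  (* (A0) *)
  (forall i : Iirr <<set0>>%G, 'chi_i = 1%R -> a set0 i = 0%R) ->
  (* (A1) *)
  (forall (J K : {set gT}) (k : Iirr <<K>>%G) (i : Iirr <<J>>%G),
      J \subset S -> K \proper J ->
      i \in irr_constt ('Ind[<<J>>%G] 'chi_k) -> le (a K k) (a J i)) ->
  (* (A2) *)
  (forall (J K : {set gT}) (k : Iirr <<K>>%G),
      J \subset S -> K \proper J ->
      exists i : Iirr <<J>>%G,
        i \in irr_constt ('Ind[<<J>>%G] 'chi_k) /\ a K k = a J i) ->
  (* (A3) *)
  (forall (J : {set gT}) (i : Iirr <<J>>%G), J \subset S -> J != set0 ->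
      exists K : {set gT}, K \proper J /\ exists k : Iirr <<K>>%G,
        (i \in irr_constt ('Ind[<<J>>%G] 'chi_k) /\ a K k = a J i) \/
        (sgn_twist J i \in irr_constt ('Ind[<<J>>%G] 'chi_k) /\
           a K k = a J (sgn_twist J i))) ->
  (* (A4) *)
  (forall (J : {set gT}) (i : Iirr <<J>>%G), J \subset S ->
      (a J (sgn_twist J i) - a J i)%R = omegaL L J i) ->
  forall (J : {set gT}) (i : Iirr <<J>>%G), J \subset S ->
    a J i = atilde le L J i.
Proof.
move=> _ hle _ _ A0 A1 _ A3 A4.
have a0 : forall i : Iirr <<set0>>%G, a set0 i = 0.
  by move=> i; apply: A0; rewrite (triv_Iirr _ i) irr0.
have nonneg : forall (J : {set gT}) (i : Iirr <<J>>%G), J \subset S -> le 0 (a J i).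
  move=> J i sJ; have [E|nJ] := eqVneq J set0.
    by subst J; rewrite a0; apply: le_refl.
  have [k hk] := constt_cfRes_irr <<(set0 : {set gT})>>%G i.
  rewrite -(a0 k); apply: A1 => //; first by rewrite proper0.
  by rewrite constt_Ind_Res.
suff key : forall n (J : {set gT}) (i : Iirr <<J>>%G), J \subset S -> (#|J| <= n)%N ->
    a J i = atilde_fuel le L n i.
  by move=> J i sJ; apply: key.
elim=> [|n IH] J i sJ hn.
  move: hn; rewrite leqn0 cards_eq0 => /eqP E; subst J; by rewrite a0.
rewrite atilde_fuelS; have [E|nJ] := eqVneq J set0.
  by subst J; rewrite a0.
rewrite /=.
pose a' := fun i' : Iirr <<J>>%G => \big[gmax le/0]_(K : {set gT} | K \proper J)
        \big[gmax le/0]_(k : Iirr <<K>>%G | i' \in irr_constt ('Ind[<<J>>%G] 'chi_k))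
          a K k.
have ha' : forall i', \big[gmax le/0]_(K : {set gT} | K \proper J)
        \big[gmax le/0]_(k : Iirr <<K>>%G | i' \in irr_constt ('Ind[<<J>>%G] 'chi_k))
          atilde_fuel le L n k = a' i'.
  move=> i'; rewrite /a'; apply: eq_bigr => K pK; apply: eq_bigr => k _.
  symmetry; apply: IH; first exact: subset_trans (proper_sub pK) sJ.
  by rewrite -ltnS; apply: leq_trans hn; apply: proper_card.
rewrite !ha'.
have up : forall i', le (a' i') (a J i').
  move=> i'; rewrite /a'; apply: big_gmax_le => //; first exact: nonneg.
  move=> K pK; apply: big_gmax_le => //; first exact: nonneg.
  by move=> k hk; apply: A1.
have eqc : forall i' (K : {set gT}) (k : Iirr <<K>>%G), K \proper J ->
    i' \in irr_constt ('Ind[<<J>>%G] 'chi_k) -> a K k = a J i' -> a' i' = a J i'.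
  move=> i' K k pK hk e; apply: (le_anti hle); first exact: up.
  rewrite /a' -e.
  apply: (le_trans' hle (y := \big[gmax le/0]_(k' : Iirr <<K>>%G | i' \in irr_constt ('Ind[<<J>>%G] 'chi_k')) a K k')).
    by apply: (big_gmax_ge hle (fun k' => a K k')) => //; rewrite mem_index_enum.
  apply: (big_gmax_ge hle (fun K' => \big[gmax le/0]_(k' : Iirr <<K'>>%G | i' \in irr_constt ('Ind[<<J>>%G] 'chi_k')) a K' k')) => //.
  by rewrite mem_index_enum.
set ts := sgn_twist J i.
have w := A4 J i sJ; rewrite -w -/ts.
have [K [pK [k [[hk e]|[hk e]]]]] := A3 J i sJ nJ.
  have -> := eqc _ _ _ pK hk e.
  by rewrite (le_add hle (- a J i) (up ts)).
have -> := eqc _ _ _ pK hk e.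
case: ifP => h; last by rewrite opprB addrC subrK.
apply: (le_anti hle) _ (up i).
have h1 := le_add hle (a' i - a J ts) h.
rewrite addrA subrK subrr [a J ts - a J i + _]addrC addrA subrK in h1.
have h2 := le_add hle (a J i) h1.
by rewrite add0r subrK in h2.
Qed.
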